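(* Let $V$ be a real vector space of dimension $n+2$ with a nondegenerate symmetric bilinear form $g_{AB}$ (used to raise and lower indices), let $\phi$ be the linear map on the space of algebraic curvature tensors on $V$ sending $R_{ABCD}$ to its trace-free part $\mathring R_{ABCD}$, and let $I^A\in V$ satisfy $\iota:=I_AI^A\neq0$. Let $I^\perp$ be the space of algebraic curvature tensors with $I^AR_{ABCD}=0$. Then $\ker(\phi)\cap I^\perp$ is spanned by $\big(g\wedge(g-\tfrac2\iota I^2)\big)_{ABCD}$, where $(I^2)_{AB}=I_AI_B$.
   Context: An algebraic curvature tensor on $V$ is $R_{ABCD}$ with $R_{ABCD}=-R_{BACD}=-R_{ABDC}$ and $R_{[ABC]D}=0$. For symmetric $Q_{AB},P_{AB}$: $(Q\wedge P)_{ABCD}=Q_{AC}P_{BD}-Q_{BC}P_{AD}+Q_{BD}P_{AC}-Q_{AD}P_{BC}$. The trace-free part of $R_{ABCD}$ is $\mathring R_{ABCD}=R_{ABCD}-(g\wedge P)_{ABCD}$ where $P_{AC}=\frac1n(R_{ABC}{}^B-\mathsf Jg_{AC})$ and $\mathsf J=P_A{}^A=\frac1{2(n+1)}R_{AB}{}^{AB}$. *)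

(* Defs.v *)
From mathcomp Require Import all_boot all_order all_algebra.
Set Implicit Arguments. Unset Strict Implicit. Unset Printing Implicit Defensive.
Import Order.TTheory GRing.Theory Num.Theory.
Local Open Scope ring_scope.

Section Defs.
Variable R : fieldType.
Variable N : nat.

(* covariant 4-tensors T_{ABCD} on V (components w.r.t. the standard basis) *)
Definition tensor4 := 'I_N -> 'I_N -> 'I_N -> 'I_N -> R.

Definition is_alg_curv (T : tensor4) : Prop :=
  (forall A B C D, T A B C D = - T B A C D) /\
  (forall A B C D, T A B C D = - T A B D C) /\
  (forall A B C D, T A B C D + T B C A D + T C A B D = 0).

Definition wedge (Q P : 'M[R]_N) : tensor4 :=
  fun A B C D => Q A C * P B D - Q B C * P A D + Q B D * P A C - Q A D * P B C.

Variable g : 'M[R]_N.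
Definition ginv : 'M[R]_N := invmx g.

Definition ricci (T : tensor4) : 'M[R]_N :=
  \matrix_(A, C) \sum_(B < N) \sum_(D < N) ginv B D * T A B C D.

Definition scal (T : tensor4) : R :=
  \sum_(A < N) \sum_(B < N) \sum_(C < N) \sum_(D < N)
     ginv A C * ginv B D * T A B C D.

End Defs.

Section Dims.
Variable R : fieldType.
Variable n : nat.
Variable g : 'M[R]_(n.+2).

Definition Jtr (T : tensor4 R n.+2) : R := (2 * (n.+1)%:R)^-1 * scal g T.

Definition schouten (T : tensor4 R n.+2) : 'M[R]_(n.+2) :=
  (n%:R)^-1 *: (ricci g T - Jtr T *: g).

Definition tracefree (T : tensor4 R n.+2) : tensor4 R n.+2 :=
  fun A B C D => T A B C D - wedge g (schouten T) A B C D.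
End Dims.

(* Main.v *)
Require Import Defs.
From mathcomp Require Import all_boot all_order all_algebra.
From mathcomp Require Import ring lra.
Import Order.TTheory GRing.Theory Num.Theory.
Local Open Scope ring_scope.

Section Aux.
Variable R : realFieldType.
Variable n : nat.
Variable g : 'M[R]_(n.+2).
Hypothesis gsym : g^T = g.
Hypothesis gnd : \det g != 0.

Local Notation Gi := (ginv g).

Lemma gS i j : g i j = g j i.
Proof. by rewrite -{1}gsym mxE. Qed.

Lemma GiS i j : Gi i j = Gi j i.
Proof. by rewrite /ginv -{1}gsym -trmx_inv mxE. Qed.

Lemma gunit : g \in unitmx.
Proof. by rewrite unitmxE unitfE. Qed.

Lemma g_Gi i j : \sum_k g i k * Gi k j = (i == j)%:R.
Proof.
have := congr1 (fun M : 'M[R]_(n.+2) => M i j) (mulmxV gunit).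
by rewrite /= !mxE => <-.
Qed.

Lemma Gi_g i j : \sum_k Gi i k * g k j = (i == j)%:R.
Proof.
have := congr1 (fun M : 'M[R]_(n.+2) => M i j) (mulVmx gunit).
by rewrite /= !mxE => <-.
Qed.

Lemma sum_deltal (F : 'I_(n.+2) -> R) i : \sum_j (i == j)%:R * F j = F i.
Proof.
rewrite (bigD1 i) //= eqxx mul1r big1 ?addr0 // => j /negbTE.
by rewrite eq_sym => ->; rewrite mul0r.
Qed.

Lemma sum_deltar (F : 'I_(n.+2) -> R) i : \sum_j (j == i)%:R * F j = F i.
Proof.
rewrite -(sum_deltal F i); apply: eq_bigr => j _; by rewrite eq_sym.
Qed.

Lemma trGg : \sum_B \sum_D Gi B D * g B D = (n.+2)%:R.
Proof.
rewrite (eq_bigr (fun B => 1)) ?sumr_const ?card_ord //.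
move=> B _; transitivity (\sum_D Gi B D * g D B).
  by apply: eq_bigr => D _; rewrite gS.
by rewrite Gi_g eqxx.
Qed.

Lemma sum4 (f1 f2 f3 f4 : 'I_(n.+2) -> 'I_(n.+2) -> R) :
  \sum_i \sum_j (f1 i j - f2 i j + f3 i j - f4 i j) =
  \sum_i \sum_j f1 i j - \sum_i \sum_j f2 i j + \sum_i \sum_j f3 i j - \sum_i \sum_j f4 i j.
Proof.
under eq_bigr => i _ do rewrite sumrB big_split sumrB /=.
by rewrite sumrB big_split sumrB.
Qed.

Lemma sum14 (f1 f2 f3 f4 : 'I_(n.+2) -> R) :
  \sum_i (f1 i - f2 i + f3 i - f4 i) =
  \sum_i f1 i - \sum_i f2 i + \sum_i f3 i - \sum_i f4 i.
Proof. by rewrite sumrB big_split sumrB. Qed.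


Definition symm (Q : 'M[R]_(n.+2)) := forall i j, Q i j = Q j i.
Definition trg (Q : 'M[R]_(n.+2)) := \sum_B \sum_D Gi B D * Q B D.

Lemma wedge_alg (Q P : 'M[R]_(n.+2)) : symm Q -> symm P -> is_alg_curv (wedge Q P).
Proof.
move=> hQ hP; split; [|split] => A B C D; rewrite /wedge; first (by ring); first (by ring).
rewrite (hQ B A) (hQ C A) (hQ C B) (hP B A) (hP C A) (hP C B); ring.
Qed.

Lemma ricci_wedge_pt Q : symm Q -> forall A C,
  ricci g (wedge g Q) A C = n%:R * Q A C + trg Q * g A C.
Proof.
move=> hQ A C; rewrite mxE.
rewrite (eq_bigr (fun B => \sum_D (Gi B D * (g A C * Q B D) - Gi B D * (g B C * Q A D)
   + Gi B D * (g B D * Q A C) - Gi B D * (g A D * Q B C)))); last first.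
  by move=> B _; apply: eq_bigr => D _; rewrite /wedge; ring.
rewrite sum4.
have e1 : \sum_B \sum_D Gi B D * (g A C * Q B D) = g A C * trg Q.
  rewrite /trg mulr_sumr; apply: eq_bigr => B _; rewrite mulr_sumr; apply: eq_bigr => D _; ring.
have e2 : \sum_B \sum_D Gi B D * (g B C * Q A D) = Q A C.
  rewrite exchange_big /= -(sum_deltal (fun D => Q A D) C) /=; apply: eq_bigr => D _.
  rewrite -g_Gi mulr_suml; apply: eq_bigr => B _; rewrite (gS B C); ring.
have e3 : \sum_B \sum_D Gi B D * (g B D * Q A C) = (n.+2)%:R * Q A C.
  rewrite -trGg mulr_suml; apply: eq_bigr => B _; rewrite mulr_suml; apply: eq_bigr => D _; ring.
have e4 : \sum_B \sum_D Gi B D * (g A D * Q B C) = Q A C.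
  rewrite -(sum_deltal (fun B => Q B C) A) /=; apply: eq_bigr => B _.
  rewrite -g_Gi mulr_suml; apply: eq_bigr => D _; rewrite (GiS B D); ring.
rewrite e1 e2 e3 e4; ring.
Qed.

Lemma ricci_wedge Q : symm Q ->
  ricci g (wedge g Q) = n%:R *: Q + trg Q *: g.
Proof. by move=> hQ; apply/matrixP => i j; rewrite ricci_wedge_pt // !mxE. Qed.

Lemma scal_ricci T : scal g T = \sum_A \sum_C Gi A C * ricci g T A C.
Proof.
rewrite /scal; apply: eq_bigr => A _; rewrite exchange_big /=; apply: eq_bigr => C _.
rewrite mxE mulr_sumr; apply: eq_bigr => B _; rewrite mulr_sumr; apply: eq_bigr => D _; ring.
Qed.

Lemma scal_wedge Q : symm Q -> scal g (wedge g Q) = (2 * (n.+1)%:R) * trg Q.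
Proof.
move=> hQ; rewrite scal_ricci.
transitivity (\sum_A \sum_C (n%:R * (Gi A C * Q A C) + trg Q * (Gi A C * g A C))).
  by apply: eq_bigr => A _; apply: eq_bigr => C _; rewrite ricci_wedge_pt //; ring.
under eq_bigr => A _ do rewrite big_split -!mulr_sumr /=.
rewrite big_split -!mulr_sumr trGg /trg /=; ring.
Qed.

Lemma Jtr_wedge Q : symm Q -> Jtr g (wedge g Q) = trg Q.
Proof.
move=> hQ; rewrite /Jtr scal_wedge // mulrA mulVf ?mul1r //.
by rewrite mulf_neq0 // pnatr_eq0.
Qed.

Lemma schouten_wedge Q : (0 < n)%N -> symm Q -> schouten g (wedge g Q) = Q.
Proof.
move=> hn hQ; rewrite /schouten ricci_wedge // Jtr_wedge //.
apply/matrixP => i j; rewrite !mxE.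
have hn0 : (n%:R : R) != 0 by rewrite pnatr_eq0 -lt0n.
field. exact: hn0.
Qed.

Lemma ricci_ext T1 T2 : (forall A B C D, T1 A B C D = T2 A B C D) -> ricci g T1 = ricci g T2.
Proof.
move=> h; apply/matrixP => i j; rewrite !mxE; apply: eq_bigr => B _; apply: eq_bigr => D _.
by rewrite h.
Qed.

Lemma scal_ext T1 T2 : (forall A B C D, T1 A B C D = T2 A B C D) -> scal g T1 = scal g T2.
Proof.
move=> h; apply: eq_bigr => A _; apply: eq_bigr => B _; apply: eq_bigr => C _; apply: eq_bigr => D _.
by rewrite h.
Qed.

Lemma schouten_ext T1 T2 : (forall A B C D, T1 A B C D = T2 A B C D) ->
  schouten g T1 = schouten g T2.
Proof. by move=> h; rewrite /schouten /Jtr (ricci_ext _ _ h) (scal_ext _ _ h). Qed.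

Lemma contrI_wedge (I : 'I_(n.+2) -> R) Q B C D :
  \sum_A I A * wedge g Q A B C D =
  (\sum_A g C A * I A) * Q B D - g B C * (\sum_A I A * Q A D)
  + g B D * (\sum_A I A * Q A C) - (\sum_A g D A * I A) * Q B C.
Proof.
rewrite (eq_bigr (fun A => I A * g A C * Q B D - g B C * (I A * Q A D)
   + g B D * (I A * Q A C) - I A * g A D * Q B C)); last first.
  by move=> A _; rewrite /wedge; ring.
rewrite sum14 -!mulr_sumr -!mulr_suml.
congr (_ - _ + _ - _); congr (_ * _); apply: eq_bigr => A _; rewrite gS; ring.
Qed.

Lemma pairsym (T : tensor4 R n.+2) : is_alg_curv T -> forall A B C D, T A B C D = T C D A B.
Proof.
move=> [h1 [h2 h3]] A B C D.
have := h1 A B C D; have := h2 A B C D; have := h3 A B C D;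
have := h1 A B D C; have := h2 A B D C; have := h3 A B D C;
have := h1 A C B D; have := h2 A C B D; have := h3 A C B D;
have := h1 A C D B; have := h2 A C D B; have := h3 A C D B;
have := h1 A D B C; have := h2 A D B C; have := h3 A D B C;
have := h1 A D C B; have := h2 A D C B; have := h3 A D C B;
have := h1 B A C D; have := h2 B A C D; have := h3 B A C D;
have := h1 B A D C; have := h2 B A D C; have := h3 B A D C;
have := h1 B C A D; have := h2 B C A D; have := h3 B C A D;
have := h1 B C D A; have := h2 B C D A; have := h3 B C D A;
have := h1 B D A C; have := h2 B D A C; have := h3 B D A C;
have := h1 B D C A; have := h2 B D C A; have := h3 B D C A;
have := h1 C A B D; have := h2 C A B D; have := h3 C A B D;
have := h1 C A D B; have := h2 C A D B; have := h3 C A D B;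
have := h1 C B A D; have := h2 C B A D; have := h3 C B A D;
have := h1 C B D A; have := h2 C B D A; have := h3 C B D A;
have := h1 C D A B; have := h2 C D A B; have := h3 C D A B;
have := h1 C D B A; have := h2 C D B A; have := h3 C D B A;
have := h1 D A B C; have := h2 D A B C; have := h3 D A B C;
have := h1 D A C B; have := h2 D A C B; have := h3 D A C B;
have := h1 D B A C; have := h2 D B A C; have := h3 D B A C;
have := h1 D B C A; have := h2 D B C A; have := h3 D B C A;
have := h1 D C A B; have := h2 D C A B; have := h3 D C A B;
have := h1 D C B A; have := h2 D C B A; have := h3 D C B A;
lra.
Qed.

Lemma ricci_sym T : is_alg_curv T -> forall A C, ricci g T A C = ricci g T C A.
Proof.
move=> hT A C; rewrite !mxE [RHS]exchange_big /=; apply: eq_bigr => B _; apply: eq_bigr => D _.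
by rewrite (GiS D B) (pairsym _ hT C D A B).
Qed.

Lemma schouten_sym T : is_alg_curv T -> symm (schouten g T).
Proof.
move=> hT i j; have := ricci_sym _ hT i j; rewrite /schouten !mxE => ->; by rewrite (gS i j).
Qed.


Lemma Gi_low (I : 'I_(n.+2) -> R) B : \sum_C Gi B C * (\sum_E g C E * I E) = I B.
Proof.
under eq_bigr => C _ do rewrite mulr_sumr.
rewrite exchange_big /= -(sum_deltal I B); apply: eq_bigr => E _.
rewrite -Gi_g mulr_suml; apply: eq_bigr => C _; ring.
Qed.

End Aux.

Theorem lemma4p24 (R : realFieldType) (n : nat) (hn : (0 < n)%N)
  (g : 'M[R]_(n.+2)) (gsym : g^T = g) (gnd : \det g != 0)
  (I : 'I_(n.+2) -> R) (* I^A *)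
  (iota : R) (hiota : iota = \sum_(A < n.+2) \sum_(B < n.+2) g A B * I A * I B)
  (hiota0 : iota != 0) :
  let Ilow : 'I_(n.+2) -> R := fun A => \sum_(B < n.+2) g A B * I B in
  let I2 : 'M[R]_(n.+2) := \matrix_(A, B) (Ilow A * Ilow B) in
  let T := wedge g (g - (2 / iota) *: I2) in
  forall Rt : tensor4 R n.+2,
    (is_alg_curv Rt /\
     (forall A B C D, tracefree g Rt A B C D = 0) /\
     (forall B C D, \sum_(A < n.+2) I A * Rt A B C D = 0))
    <-> exists c : R, forall A B C D, Rt A B C D = c * T A B C D.
Proof.
move=> Ilow I2 T Rt.
have gS' := gS _ _ _ gsym.
have hn0 : (n%:R : R) != 0 by rewrite pnatr_eq0 -lt0n.
have hIi : \sum_A I A * Ilow A = iota.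
  rewrite hiota; apply: eq_bigr => A _; rewrite /Ilow mulr_sumr; apply: eq_bigr => B _; ring.
split.
- move=> [hT [htf hI]].
  set P := schouten g Rt.
  have hP : symm _ _ P := schouten_sym _ _ _ gsym _ hT.
  have hR : forall A B C D, Rt A B C D = wedge g P A B C D.
    move=> A B C D; have := htf A B C D; rewrite /tracefree => /eqP; rewrite subr_eq0 => /eqP.
    done.
  pose q := fun D => \sum_A I A * P A D.
  have E : forall B C D, Ilow C * P B D - g B C * q D + g B D * q C - Ilow D * P B C = 0.
    move=> B C D; rewrite -(hI B C D) (eq_bigr (fun A => I A * wedge g P A B C D)); last first.
      by move=> A _; rewrite hR.
    by rewrite contrI_wedge.
  pose t := trg _ _ g P.
  pose k := - (t / n%:R).
  have hq : forall D, q D = k * Ilow D.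
    move=> D.
    have H : \sum_B \sum_C ginv g B C * (Ilow C * P B D - g B C * q D + g B D * q C - Ilow D * P B C) = 0.
      by rewrite big1 // => B _; rewrite big1 // => C _; rewrite E mulr0.
    move: H; rewrite (eq_bigr (fun B => \sum_C (ginv g B C * (Ilow C * P B D) - ginv g B C * (g B C * q D)
       + ginv g B C * (g B D * q C) - ginv g B C * (Ilow D * P B C)))); last first.
      by move=> B _; apply: eq_bigr => C _; ring.
    rewrite sum4.
    have e1 : \sum_B \sum_C ginv g B C * (Ilow C * P B D) = q D.
      rewrite /q; apply: eq_bigr => B _; rewrite -[in RHS](Gi_low _ _ _ gnd I B) mulr_suml.
      apply: eq_bigr => C _; rewrite /Ilow; ring.
    have e2 : \sum_B \sum_C ginv g B C * (g B C * q D) = (n.+2)%:R * q D.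
      rewrite -(trGg _ _ _ gsym gnd) mulr_suml; apply: eq_bigr => B _; rewrite mulr_suml.
      apply: eq_bigr => C _; ring.
    have e3 : \sum_B \sum_C ginv g B C * (g B D * q C) = q D.
      rewrite exchange_big /= -(sum_deltar _ _ q D); apply: eq_bigr => C _.
      rewrite -(Gi_g _ _ _ gnd) mulr_suml; apply: eq_bigr => B _; rewrite (GiS _ _ _ gsym B C); ring.
    have e4 : \sum_B \sum_C ginv g B C * (Ilow D * P B C) = Ilow D * t.
      rewrite /t /trg mulr_sumr; apply: eq_bigr => B _; rewrite mulr_sumr; apply: eq_bigr => C _; ring.
    rewrite e1 e2 e3 e4 => H.
    have H2 : n%:R * q D + t * Ilow D = 0.
      transitivity (- (q D - (n.+2)%:R * q D + q D - Ilow D * t)); first by ring.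
      by rewrite H oppr0.
    apply: (mulfI hn0).
    rewrite (_ : n%:R * q D = - (t * Ilow D)); last by apply/eqP; rewrite -subr_eq0 opprK H2.
    rewrite /k; field; exact: hn0.
  have hPf : forall B D, P B D = (- k) * (g B D - 2 / iota * (Ilow B * Ilow D)).
    move=> B D.
    have H : \sum_C I C * (Ilow C * P B D - g B C * q D + g B D * q C - Ilow D * P B C) = 0.
      by rewrite big1 // => C _; rewrite E mulr0.
    move: H; rewrite (eq_bigr (fun C => I C * (Ilow C * P B D) - I C * (g B C * q D)
       + I C * (g B D * q C) - I C * (Ilow D * P B C))); last first.
      by move=> C _; ring.
    rewrite sum14.
    have f1 : \sum_C I C * (Ilow C * P B D) = iota * P B D.
      rewrite -hIi mulr_suml; apply: eq_bigr => C _; ring.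
    have f2 : \sum_C I C * (g B C * q D) = Ilow B * q D.
      rewrite /Ilow mulr_suml; apply: eq_bigr => C _; ring.
    have f3 : \sum_C I C * (g B D * q C) = g B D * (k * iota).
      rewrite -hIi !mulr_sumr; apply: eq_bigr => C _; rewrite hq; ring.
    have f4 : \sum_C I C * (Ilow D * P B C) = Ilow D * q B.
      rewrite /q mulr_sumr; apply: eq_bigr => C _; rewrite (hP B C); ring.
    rewrite f1 f2 f3 f4 !hq => H.
    apply: (mulfI hiota0).
    transitivity (iota * P B D - (iota * P B D - Ilow B * (k * Ilow D) + g B D * (k * iota)
       - Ilow D * (k * Ilow B))); first by rewrite H subr0.
    field; exact: hiota0.
  exists (- k) => A B C D.
  rewrite hR /wedge !hPf /T /wedge !mxE; ring.
- move=> [c hc].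
  pose Q' := c *: (g - (2 / iota) *: I2).
  have hQ' : symm _ _ Q'.
    by move=> i j; rewrite !mxE (gS' i j); ring.
  have hR : forall A B C D, Rt A B C D = wedge g Q' A B C D.
    by move=> A B C D; rewrite hc /T /wedge !mxE; ring.
  have hq' : forall D, \sum_A I A * Q' A D = - c * Ilow D.
    move=> D; rewrite /Q'.
    rewrite (eq_bigr (fun A => c * (g D A * I A) - c * (2 / iota) * Ilow D * (I A * Ilow A))); last first.
      by move=> A _; rewrite !mxE (gS' A D); ring.
    rewrite sumrB -!mulr_sumr hIi.
    change (\sum_A g D A * I A) with (Ilow D).
    field; exact: hiota0.
  split; [|split].
  + move: (wedge_alg _ _ _ _ gS' hQ') => [a1 [a2 a3]].
    split; [|split] => A B C D; rewrite !hR; [exact: a1 | exact: a2 | exact: a3].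
  + move=> A B C D; rewrite /tracefree (schouten_ext _ _ _ _ _ hR).
    rewrite (schouten_wedge _ _ _ gsym gnd) // hR subrr //.
  + move=> B C D; rewrite (eq_bigr (fun A => I A * wedge g Q' A B C D)); last first.
      by move=> A _; rewrite hR.
    rewrite (contrI_wedge _ _ _ gsym) !hq'.
    change (\sum_A g C A * I A) with (Ilow C).
    change (\sum_A g D A * I A) with (Ilow D).
    rewrite /Q' !mxE; ring.
Qed.
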